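(* Let $w$ be a factor of slope $\alpha$ and let $m$ be an abelian period of $w$ with $m\notin\mathcal{Q}_\alpha\cup\mathcal{M}_\alpha$. If $a_1\ge4$ and $(a_2-1)q_1+2<m<a_2q_1$, then $m$ is not the minimum abelian period of $w$.
   Context: $\alpha\in(0,1)$ irrational, $\alpha=[0;a_1,a_2,\ldots]$ with positive integers $a_i$, $a_1\ge2$; $q_{-1}=0$, $q_0=1$, $q_1=a_1$, $q_k=a_kq_{k-1}+q_{k-2}$ ($k\ge2$); for $k\ge2$, $1\le\ell<a_k$, $q_{k,\ell}=\ell q_{k-1}+q_{k-2}$. $\mathcal{Q}_\alpha=\{q_k:k\ge0\}\cup\{q_{k,\ell}: k\ge2,\ 1\le\ell<a_k\}$ and $\mathcal{M}_\alpha=\{tq_k: k\ge0,\ 1\le t\le a_{k+1}\}$. Sturmian words: on $\mathbb{T}=[0,1)$ with $R(\rho)=\{\rho+\alpha\}$ and either $I_0=[0,1-\alpha)$, $I_1=[1-\alpha,1)$ or $I_0=(0,1-\alpha]$, $I_1=(1-\alpha,1]$, $\mathbf{s}_{\rho,\alpha}$ has $n$-th letter $0$ iff $R^n(\rho)\in I_0$; all share the set $\mathcal{L}_\alpha$ of finite factors (factors of slope $\alpha$). Parikh vector of a binary word $u$: $(|u|_0,|u|_1)$; $P$ is contained in $Q$ if $P\le Q$ componentwise and $P\neq Q$. An abelian decomposition of $w$ is $w=u_0u_1\cdots u_{n-1}u_n$, $n\ge2$, with $u_1,\ldots,u_{n-1}$ of common Parikh vector $P$ and the Parikh vectors of $u_0,u_n$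 contained in $P$; the common length of $u_1,\dots,u_{n-1}$ is an abelian period; the minimum abelian period is the least one. *)

(* Defs.v *)
From Stdlib Require Import Reals.
From mathcomp Require Import ssreflect ssrfun ssrbool eqtype ssrnat seq.

Set Implicit Arguments.
Unset Strict Implicit.
Unset Printing Implicit Defensive.

(* Partial quotients are given by a : nat -> nat, with a i = a_i for i >= 1
   (a 0 is unused; alpha = [0; a_1, a_2, ...]). *)

(* pq a k = (p_k, q_k) together with (p_{k+1}, q_{k+1}). *)
Fixpoint pq2 (a : nat -> nat) (k : nat) : (nat * nat) * (nat * nat) :=
  match k with
  | 0 => ((0, 1), (1, a 1))
  | k'.+1 =>
      let: (x, y) := pq2 a k' in
      (y, (a k'.+2 * y.1 + x.1, a k'.+2 * y.2 + x.2)%N)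
  end.

Definition cf_p (a : nat -> nat) (k : nat) : nat := (pq2 a k).1.1.
Definition cf_q (a : nat -> nat) (k : nat) : nat := (pq2 a k).1.2.

Definition cf_expansion (a : nat -> nat) (alpha : R) : Prop :=
  (forall i, (1 <= i)%N -> (0 < a i)%N) /\
  Un_cv (fun k => (INR (cf_p a k) / INR (cf_q a k))%R) alpha.

Definition irrational (x : R) : Prop :=
  ~ (exists (u v : Z), v <> 0%Z /\ x = (IZR u / IZR v)%R).

Definition in_Q (a : nat -> nat) (m : nat) : Prop :=
  (exists k, m = cf_q a k) \/
  (exists k l, (2 <= k)%N /\ (1 <= l)%N /\ (l < a k)%N /\
               m = (l * cf_q a k.-1 + cf_q a k.-2)%N).

Definition in_M (a : nat -> nat) (m : nat) : Prop :=
  exists k t, (1 <= t)%N /\ (t <= a k.+1)%N /\ m = (t * cf_q a k)%N.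

(* Words over {0,1}: letter 0 is false, letter 1 is true. *)
Definition word := seq bool.

Definition frac (x : R) : R := (x - IZR (Int_part x))%R.

(* Letter n of s_{rho,alpha} with I_0 = [0,1-alpha), I_1 = [1-alpha,1). *)
Definition sturm_letter_lo (alpha rho : R) (n : nat) : bool :=
  if Rlt_dec (frac (rho + INR n * alpha)) (1 - alpha) then false else true.

(* Letter n of s_{rho,alpha} with I_0 = (0,1-alpha], I_1 = (1-alpha,1],
   the point 0 of T = [0,1) being identified with 1. *)
Definition sturm_letter_up (alpha rho : R) (n : nat) : bool :=
  let x := frac (rho + INR n * alpha) in
  if Rlt_dec 0 x then (if Rle_dec x (1 - alpha) then false else true)
  else true.

Definition factor_of_slope (alpha : R) (w : word) : Prop :=
  exists (rho : R) (i : nat),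
    (0 <= rho < 1)%R /\
    (w = mkseq (fun j => sturm_letter_lo alpha rho (i + j)) (size w) \/
     w = mkseq (fun j => sturm_letter_up alpha rho (i + j)) (size w)).

Definition parikh (u : word) : nat * nat := (count_mem false u, count_mem true u).

Definition pv_contained (P Q : nat * nat) : Prop :=
  (P.1 <= Q.1)%N /\ (P.2 <= Q.2)%N /\ P <> Q.

Definition abelian_period (w : word) (m : nat) : Prop :=
  exists (u0 un : word) (us : seq word) (P : nat * nat),
    w = u0 ++ flatten us ++ un /\ us <> [::] /\
    (forall u, u \in us -> parikh u = P /\ size u = m) /\
    pv_contained (parikh u0) P /\ pv_contained (parikh un) P.

Definition min_abelian_period (w : word) (m : nat) : Prop :=
  abelian_period w m /\ (forall m', abelian_period w m' -> (m <= m')%N).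

(* Main.v *)
Require Import Defs.
From Stdlib Require Import Reals Lra Lia ZArith.
From mathcomp Require Import ssreflect ssrfun ssrbool eqtype ssrnat seq path div zify.


Lemma cf_p_rec a k : cf_p a k.+2 = (a k.+2 * cf_p a k.+1 + cf_p a k)%N.
Proof. rewrite /cf_p /=. by case: (pq2 a k) => [[x1 x2] [y1 y2]]. Qed.
Lemma cf_q_rec a k : cf_q a k.+2 = (a k.+2 * cf_q a k.+1 + cf_q a k)%N.
Proof. rewrite /cf_q /=. by case: (pq2 a k) => [[x1 x2] [y1 y2]]. Qed.
Lemma cf_q1 a : cf_q a 1 = a 1. Proof. by []. Qed.
Lemma cf_p1 a : cf_p a 1 = 1%N. Proof. by []. Qed.
Lemma cf_q0 a : cf_q a 0 = 1%N. Proof. by []. Qed.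
Lemma cf_p0 a : cf_p a 0 = 0%N. Proof. by []. Qed.

Lemma cf_q_pos a : (forall i, (1 <= i)%N -> (0 < a i)%N) -> forall k, (0 < cf_q a k)%N.
Proof.
move=> Ha.
have H : forall k, (0 < cf_q a k)%N /\ (0 < cf_q a k.+1)%N.
  elim=> [|k [h1 h2]]; first by split; [|rewrite cf_q1; apply: Ha].
  split=> //; rewrite cf_q_rec; have := Ha k.+2 isT; lia.
by move=> k; case: (H k).
Qed.

Lemma mediant (A p q p' q' L U : R) : (1 <= A)%R -> (0 < q)%R -> (0 < q')%R ->
  (L <= p / q <= U)%R -> (L <= p' / q' <= U)%R ->
  (L <= (A * p' + p) / (A * q' + q) <= U)%R.
Proof.
move=> hA hq hq' [h1 h2] [h3 h4].
set x := (p / q)%R in h1 h2. set y := (p' / q')%R in h3 h4.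
have ex : p = (x * q)%R by rewrite /x; field; lra.
have ey : p' = (y * q')%R by rewrite /y; field; lra.
have hd : (0 < A * q' + q)%R by nra.
set z := ((A * p' + p) / (A * q' + q))%R.
have ez : (A * p' + p)%R = (z * (A * q' + q))%R by rewrite /z; field; lra.
rewrite ex ey in ez.
have hAq : (0 <= A * q')%R by nra.
have e1 : (A * (y * q') + x * q - L * (A * q' + q) = (z - L) * (A * q' + q))%R by rewrite ez; ring.
have e2 : (U * (A * q' + q) - (A * (y * q') + x * q) = (U - z) * (A * q' + q))%R by rewrite ez; ring.
have f1 : (0 <= A * (y * q') + x * q - L * (A * q' + q))%R.
  have : (0 <= (y - L) * (A * q'))%R by apply: Rmult_le_pos; lra.
  have : (0 <= (x - L) * q)%R by apply: Rmult_le_pos; lra.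
  nra.
have f2 : (0 <= U * (A * q' + q) - (A * (y * q') + x * q))%R.
  have : (0 <= (U - y) * (A * q'))%R by apply: Rmult_le_pos; lra.
  have : (0 <= (U - x) * q)%R by apply: Rmult_le_pos; lra.
  nra.
split.
- apply: Rnot_lt_le => hc. have : ((z - L) * (A * q' + q) < 0)%R. apply: Rmult_neg_pos; lra. lra.
- apply: Rnot_lt_le => hc. have : ((U - z) * (A * q' + q) < 0)%R. apply: Rmult_neg_pos; lra. lra.
Qed.

Section Alpha.
Variables (a : nat -> nat) (alpha : R).
Hypothesis Hcf : cf_expansion a alpha.
Hypothesis Hirr : irrational alpha.

Definition cv k := (INR (cf_p a k) / INR (cf_q a k))%R.

Lemma cv_between : forall k, (1 <= k)%N -> (cv 2 <= cv k <= cv 1)%R.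
Proof.
case: Hcf => Ha _.
have qpos : forall k, (0 < INR (cf_q a k))%R.
  move=> k; apply: lt_0_INR; apply/ltP; exact: cf_q_pos.
have c21 : (cv 2 <= cv 1)%R.
  rewrite /cv cf_p_rec cf_q_rec cf_p1 cf_q1 cf_p0 cf_q0.
  have h1 := Ha 1 isT; have h2 := Ha 2 isT.
  rewrite !plus_INR !mult_INR /=.
  have : (1 <= INR (a 1))%R by apply: (le_INR 1); apply/leP.
  have : (1 <= INR (a 2))%R by apply: (le_INR 1); apply/leP.
  move=> g2 g1.
  apply: (Rmult_le_reg_r (INR (a 1) * (INR (a 2) * INR (a 1) + 1))); first nra.
  field_simplify; try lra. nra.
have H : forall k, (1 <= k)%N -> (cv 2 <= cv k <= cv 1)%R /\ (cv 2 <= cv k.+1 <= cv 1)%R.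
  elim=> [//|k IH] hk.
  case: k IH hk => [|k] IH hk; first by split; lra.
  have [h1 h2] := IH isT. split=> //.
  have -> : cv k.+3 = ((INR (a k.+3) * INR (cf_p a k.+2) + INR (cf_p a k.+1)) / (INR (a k.+3) * INR (cf_q a k.+2) + INR (cf_q a k.+1)))%R.
    by rewrite /cv cf_p_rec cf_q_rec !plus_INR !mult_INR.
  apply: mediant; [|exact: qpos|exact: qpos|exact: h1|exact: h2].
  by apply: (le_INR 1); apply/leP; apply: Ha.
by move=> k hk; case: (H k hk).
Qed.

Lemma alpha_between : (cv 2 < alpha < cv 1)%R.
Proof.
case: Hcf => Ha Hcv.
have hle : (cv 2 <= alpha <= cv 1)%R.
  split; apply: Rnot_lt_le => hlt.
  - have [N HN] := Hcv (cv 2 - alpha)%R ltac:(lra).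
    have := HN (N + 1)%nat ltac:(lia). rewrite /R_dist.
    have := cv_between (N + 1) ltac:(lia). rewrite /cv.
    move=> h h'. apply Rabs_def2 in h'. lra.
  - have [N HN] := Hcv (alpha - cv 1)%R ltac:(lra).
    have := HN (N + 1)%nat ltac:(lia). rewrite /R_dist.
    have := cv_between (N + 1) ltac:(lia). rewrite /cv.
    move=> h h'. apply Rabs_def2 in h'. lra.
have rat : forall k, alpha <> cv k.
  move=> k he; apply: Hirr.
  exists (Z.of_nat (cf_p a k)), (Z.of_nat (cf_q a k)); split.
  - have := @cf_q_pos a Ha k; lia.
  - by rewrite he /cv !INR_IZR_INZ.
have := rat 1; have := rat 2; lra.
Qed.

End Alpha.


Lemma INR_addn (x y : nat) : INR (x + y)%N = (INR x + INR y)%R.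
Proof. by rewrite -plus_INR. Qed.
Lemma INR_muln (x y : nat) : INR (x * y)%N = (INR x * INR y)%R.
Proof. by rewrite -mult_INR. Qed.

Lemma spacing (a1 a2 : nat) (alpha : R) (d : nat) (n : Z) :
  (0 < alpha)%R -> (INR a1 * alpha < 1)%R -> (INR a2 < alpha * INR (a1 * a2 + 1))%R ->
  (1 <= a1)%N -> (0 < d)%N -> (d < a1 * a2 + 1)%N ->
  (INR d * alpha - IZR n >= 1 - INR a1 * alpha)%R \/
  (IZR n - INR d * alpha >= 1 - INR a1 * alpha)%R.
Proof.
move=> ha h1 h2 ha1 hd0 hd.
have ed := divn_eq d a1.
set t := d %/ a1 in ed. set u := d %% a1 in ed.
have hu : (u < a1)%N by rewrite /u ltn_pmod.
set c := (n - Z.of_nat t)%Z.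
have en : IZR n = (IZR c + INR t)%R by rewrite /c minus_IZR -INR_IZR_INZ; ring.
have eD : INR d = (INR t * INR a1 + INR u)%R by rewrite {1}ed INR_addn INR_muln.
rewrite en eD.
have hA1 : (1 <= INR a1)%R by apply: (le_INR 1); apply/leP.
rewrite INR_addn INR_muln /= in h2.
set A1 := INR a1 in h1 h2 hA1 *. set A2 := INR a2 in h2 *.
set T := INR t. set U := INR u.
set del := (1 - A1 * alpha)%R.
have hdel : (0 < del)%R by rewrite /del; lra.
have hT0 : (0 <= T)%R by apply: pos_INR.
have hA2 : (0 <= A2)%R by apply: pos_INR.
have hdelq : (del * (A1 * A2 + 1) < 1)%R.
  rewrite /del. have : (A1 * A2 < A1 * (alpha * (A1 * A2 + 1)))%R by apply: Rmult_lt_compat_l; lra.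
  nra.
case: (posnP u) => hu0.
-
  have ht1 : (1 <= t)%N by move: ed hd0; rewrite hu0 addn0; case: (t) => [|?]; [rewrite mul0n => ->|].
  have ht2 : (t <= a2)%N.
    have : (t * a1 <= a2 * a1)%N by lia.
    by rewrite leq_pmul2r //; lia.
  have hT1 : (1 <= T)%R by apply: (le_INR 1); apply/leP.
  have hT2 : (T <= A2)%R by apply: le_INR; apply/leP.
  have hU : U = 0%R by rewrite /U hu0.
  rewrite hU.
  have e1 : ((T * A1 + 0) * alpha - (IZR c + T) = - IZR c - T * del)%R by rewrite /del; ring.
  rewrite e1.
  have : (T * del <= A2 * del)%R by apply: Rmult_le_compat_r; lra.
  have : (del <= T * del)%R by nra.
  case: (Z_lt_le_dec c 0) => hc.
  + have : (IZR c <= -1)%R by apply: IZR_le; lia.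
    move=> hc1 h3 h4. left. nra.
  + case: (Z.eq_dec c 0) => hc0.
    * rewrite hc0. move=> h3 h4. right. lra.
    * have : (1 <= IZR c)%R by apply: IZR_le; lia.
      move=> hc1 h3 h4. right. lra.
-
  have ht2 : (t.+1 <= a2)%N.
    have : (t * a1 < a2 * a1)%N by lia.
    by rewrite ltn_pmul2r //; lia.
  have hT2 : (T + 1 <= A2)%R.
    have := le_INR _ _ (ltP ht2). rewrite S_INR. done.
  have hU1 : (1 <= U)%R by apply: (le_INR 1); apply/leP.
  have hU2 : (U + 1 <= A1)%R.
    have := le_INR _ _ (ltP hu). rewrite S_INR. done.
  have e1 : ((T * A1 + U) * alpha - (IZR c + T) = - IZR c + (U * alpha - T * del))%R by rewrite /del; ring.
  rewrite e1.
  have v1 : (del < U * alpha - T * del)%R.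
    have : (alpha <= U * alpha)%R by nra.
    have : (T * del <= (A2 - 1) * del)%R by apply: Rmult_le_compat_r; lra.
    have : (A2 < alpha * (A1 * A2 + 1))%R by lra.
    rewrite /del. nra.
  have v2 : (U * alpha - T * del < 1 - del)%R.
    have : (U * alpha <= (A1 - 1) * alpha)%R by apply: Rmult_le_compat_r; lra.
    have : (0 <= T * del)%R by nra.
    rewrite /del. nra.
  case: (Z_lt_le_dec 0 c) => hc.
  + have : (1 <= IZR c)%R by apply: IZR_le; lia.
    move=> hc1. right. lra.
  + have : (IZR c <= 0)%R by apply: IZR_le; lia.
    move=> hc1. left. lra.
Qed.


Lemma ar_low1' k m b a1 : (k * m * (b + 1) < (k * b + 1) * (a1 * (b + 1) + 1))%N ->
  (k * ((b * a1 + 3) * (b + 1)) <= k * (m * (b + 1)))%N ->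
  (k * (2 * (b + 1) + 1) < a1 * (b + 1) + 1)%N.
Proof. move=> h1 h2. lia. Qed.

Lemma ar_low2' k c a2 : (k * (2 * a2 + 1) < (c + 2) * a2 + 1)%N -> (2 <= c)%N ->
 ((c) * (2 * a2 + 1) <= k * (2 * a2 + 1))%N -> (4 * a2 <= (c + 2) * a2)%N -> False.
Proof. move=> h1 h2 h3 h4. lia. Qed.

Lemma ar_low1 k m a2 a1 : (k * m * a2 < (k * (a2 - 1) + 1) * (a1 * a2 + 1))%N ->
  (k * (((a2 - 1) * a1 + 3) * a2) <= k * (m * a2))%N -> (1 <= a2)%N ->
  (k * (2 * a2 + 1) < a1 * a2 + 1)%N.
Proof.
move=> h1 h2 h3.
set b := (a2 - 1)%N in h1 h2. have eb : a2 = (b + 1)%N by unfold b; lia. clearbody b. subst a2. exact (ar_low1' k m b a1 h1 h2).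
Qed.

Lemma ar_low2 k a1 a2 : (k * (2 * a2 + 1) < a1 * a2 + 1)%N -> (4 <= a1)%N -> (k + 3 <= a1)%N.
Proof.
move=> h1 h4. rewrite leqNgt; apply/negP => hc.
have hx : ((a1 - 2) * (2 * a2 + 1) <= k * (2 * a2 + 1))%N by apply: leq_mul => //; lia.
have hy : (4 * a2 <= a1 * a2)%N by apply: leq_mul.
set c := (a1 - 2)%N in hx. have ec : a1 = (c + 2)%N by unfold c; lia. clearbody c. subst a1. exact (ar_low2' k c a2 h1 ltac:(lia) hx hy).
Qed.

Lemma ar_real (X al Q A2 B : R) : (X * A2 < X * (al * Q))%R -> (X * al * Q < B * Q)%R -> (X * A2 < B * Q)%R.
Proof. move=> h1 h2. rewrite -Rmult_assoc in h1. lra. Qed.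

Section Core.
Variables (F : nat -> Z) (alpha : R) (a1 a2 m N o k e K : nat).
Hypothesis ha : (0 < alpha)%R.
Hypothesis h1 : (INR a1 * alpha < 1)%R.
Hypothesis h2 : (INR a2 < alpha * INR (a1 * a2 + 1))%R.
Hypothesis ha1 : (4 <= a1)%N.
Hypothesis ha2 : (2 <= a2)%N.
Hypothesis hlo : ((a2 - 1) * a1 + 2 < m)%N.
Hypothesis hhi : (m < a2 * a1)%N.
Hypothesis HA1 : forall x y, (x <= y)%N ->
  (INR (y - x) * alpha - 1 < IZR (F y - F x) < INR (y - x) * alpha + 1)%R.
Hypothesis HA2 : forall s s', (s <= s')%N -> F (s + a1) = F s -> F (s' + a1) = F s' ->
  (INR (s' - s) * alpha - (1 - INR a1 * alpha) < IZR (F s' - F s) <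
   INR (s' - s) * alpha + (1 - INR a1 * alpha))%R.
Hypothesis HN : N = (o + k * m + e)%N.
Hypothesis ho : (o < m)%N.
Hypothesis he : (e < m)%N.
Hypothesis hk : (1 <= k)%N.
Hypothesis HK : forall j, (j < k)%N -> (F (o + j.+1 * m) - F (o + j * m) = Z.of_nat K)%Z.

Lemma C1 x y : (x <= y)%N -> (Z.of_nat a1 * (F y - F x) <= Z.of_nat (y - x) + Z.of_nat a1 - 1)%Z.
Proof.
move=> hxy. have [_ hb] := HA1 _ _ hxy.
have hA : (0 < INR a1)%R by apply: lt_0_INR; apply/ltP; lia.
have hy : (0 <= INR (y - x))%R by apply: pos_INR.
have : (INR a1 * IZR (F y - F x) < INR (y - x) + INR a1)%R.
  have : (INR a1 * IZR (F y - F x) < INR a1 * (INR (y - x) * alpha + 1))%R.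
    by apply: Rmult_lt_compat_l.
  have : (INR (y - x) * (INR a1 * alpha) <= INR (y - x))%R.
    rewrite -{2}(Rmult_1_r (INR (y - x))). apply: Rmult_le_compat_l; lra.
  nra.
rewrite !INR_IZR_INZ -mult_IZR -plus_IZR => /lt_IZR. lia.
Qed.

Lemma Fmono x y : (x <= y)%N -> (F x <= F y)%Z.
Proof.
move=> hxy. have [hb _] := HA1 _ _ hxy.
have : (0 <= INR (y - x) * alpha)%R by apply: Rmult_le_pos; [apply: pos_INR| lra].
move=> h. have : (-1 < IZR (F y - F x))%R by lra.
move=> /lt_IZR. lia.
Qed.

Definition occ s := Z.eqb (F (s + a1)) (F s).

Lemma sep s s' : (s < s')%N -> occ s -> occ s' -> (s + (a1 * a2 + 1) <= s')%N.
Proof.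
move=> hss /Z.eqb_eq o1 /Z.eqb_eq o2.
rewrite leqNgt; apply/negP => hc.
have [hl hr] := HA2 _ _ (ltnW hss) o1 o2.
have hd0 : (0 < s' - s)%N by lia.
have hd1 : (s' - s < a1 * a2 + 1)%N by lia.
have := @spacing a1 a2 alpha (s' - s) (F s' - F s)%Z ha h1 h2 ltac:(lia) hd0 hd1.
lra.
Qed.

Definition S := [seq s <- iota 0 (N - a1).+1 | occ s].

Lemma S_sorted : sorted ltn S.
Proof. rewrite /S. apply: sorted_filter; [exact: ltn_trans | exact: iota_ltn_sorted]. Qed.

Lemma S_nth i : (i < size S)%N -> occ (nth 0%N S i) /\ (nth 0%N S i <= N - a1)%N.
Proof.
move=> hi. have := mem_nth 0 hi. rewrite /S mem_filter mem_iota => /andP [-> /andP [_ h]].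
split=> //; lia.
Qed.

Lemma S_lt i j : (i < j)%N -> (j < size S)%N -> (nth 0%N S i < nth 0%N S j)%N.
Proof.
move=> hij hj. apply: (sorted_ltn_nth ltn_trans 0 S_sorted) => //; rewrite inE; lia.
Qed.

Lemma S_space i j : (i <= j)%N -> (j < size S)%N ->
  (nth 0%N S i + (j - i) * (a1 * a2 + 1) <= nth 0%N S j)%N.
Proof.
move=> hij hj. elim: j hij hj => [|j IH] hij hj.
- have -> : i = 0%N by lia. rewrite subnn mul0n addn0 //.
- case: (ltnP i j.+1) => h; last first.
    have hi : i = j.+1 by lia.
    by rewrite hi subnn mul0n addn0.
  have := IH ltac:(lia) ltac:(lia).
  have := sep _ _ (S_lt _ _ (ltnSn j) hj) (S_nth j ltac:(lia)).1 (S_nth _ hj).1.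
  have -> : (j.+1 - i = (j - i).+1)%N by lia.
  rewrite mulSn. lia.
Qed.

Lemma seg t : forall p lo hi, (p + t <= size S)%N -> (lo <= hi)%N ->
  (0 < t -> lo <= nth 0%N S p /\ nth 0%N S (p + t - 1) + a1 <= hi)%N ->
  (Z.of_nat a1 * (F hi - F lo) <= Z.of_nat (hi - lo) + Z.of_nat a1 - 1 - Z.of_nat t)%Z.
Proof.
elim: t => [|t IH] p lo hi hpt hlh hc.
- have := C1 _ _ hlh. lia.
- have [hl hh] := hc isT.
  have hp : (p < size S)%N by lia.
  have [/Z.eqb_eq hocc _] := S_nth _ hp.
  have hpt' : (nth 0%N S p <= nth 0%N S (p + t.+1 - 1))%N.
    case: (posnP t) => ht; first by rewrite ht addn1 subn1 /=.
    apply: ltnW; apply: S_lt; lia.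
  have hsh : (nth 0%N S p + a1 <= hi)%N by lia.
  have IH' := IH p.+1 (nth 0%N S p + a1) hi ltac:(lia) hsh.
  have : (Z.of_nat a1 * (F hi - F (nth 0%N S p + a1)) <=
          Z.of_nat (hi - (nth 0%N S p + a1)) + Z.of_nat a1 - 1 - Z.of_nat t)%Z.
    apply: IH' => ht. split.
    + have := sep _ _ (S_lt p p.+1 (ltnSn p) ltac:(lia)) (S_nth _ hp).1 (S_nth p.+1 ltac:(lia)).1.
      have : (a1 <= a1 * a2 + 1)%N by nia.
      lia.
    + have -> : (p.+1 + t - 1 = p + t.+1 - 1)%N by lia. done.
  have := C1 _ _ hl.
  rewrite hocc. lia.
Qed.

Lemma tele j : (j <= k)%N -> (F (o + j * m) - F o = Z.of_nat (j * K))%Z.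
Proof.
elim: j => [|j IH] hj; first by rewrite mul0n addn0; lia.
have := HK j hj. have := IH (ltnW hj). lia.
Qed.

Lemma S_small : (size S <= a1 - 1)%N.
Proof.
rewrite leqNgt; apply/negP => hS.
have hq : (m + 2 <= a1 * a2 + 1)%N by lia.
have sp0 : forall i, (i < size S)%N -> (i * (a1 * a2 + 1) <= nth 0%N S i)%N.
  move=> i hi. have := S_space _ _ (leq0n i) hi. rewrite subn0. lia.
have hT := tele _ (leqnn k).
case: (leqP a2 K) => hK.
-
  have hs1 := sp0 1%N ltac:(lia).
  have hsp := S_space (a1 - 2)%N (a1 - 1)%N ltac:(lia) ltac:(lia).
  have e1 : (a1 - 1 - (a1 - 2) = 1)%N by lia. rewrite e1 mul1n in hsp.
  have hsl := (S_nth (a1 - 1)%N ltac:(lia)).2.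
  have hseg2 : (Z.of_nat a1 * (F (o + k * m) - F o) <= Z.of_nat (o + k * m - o) + Z.of_nat a1 - 1 - Z.of_nat (a1 - 2))%Z.
    apply: (@seg (a1 - 2) 1 o (o + k * m)); [lia|lia|] => _; split.
    + lia.
    + have -> : (1 + (a1 - 2) - 1 = a1 - 2)%N by lia.
      lia.
  rewrite hT in hseg2.
  have hk1 : (a1 * (k * K) <= k * m + 1)%N.
    have e2 : (o + k * m - o = k * m)%N by lia.
    rewrite e2 in hseg2. lia.
  have hK1 : (m + 1 <= a1 * K)%N.
    apply: leq_trans (_ : m + 1 <= a1 * a2)%N _; first lia.
    by apply: leq_mul.
  have hK2 : (k * (m + 1) <= k * (a1 * K))%N by apply: leq_mul.
  have hk1' : k = 1%N by lia.
  have hs3 := sp0 3%N ltac:(lia).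
  have hs3' := (S_nth 3%N ltac:(lia)).2.
  have HN' := HN. rewrite hk1' in HN'. lia.
-
  have hKle : (K <= a2 - 1)%N by lia.
  have [hb _] := HA1 o (o + k * m)%N ltac:(lia).
  rewrite hT in hb.
  have hkm : (k * m * a2 < (k * (a2 - 1) + 1) * (a1 * a2 + 1))%N.
    apply/ltP; apply: INR_lt.
    have e1 : (o + k * m - o = k * m)%N by lia.
    rewrite e1 INR_muln in hb.
    rewrite -INR_IZR_INZ INR_muln in hb.
    have hKr : (INR K <= INR (a2 - 1))%R by apply: le_INR; apply/leP.
    have hk0 : (0 <= INR k)%R by apply: pos_INR.
    have hm0 : (0 < INR k * INR m)%R.
      apply: Rmult_lt_0_compat; apply: lt_0_INR; apply/ltP; lia.
    have hx : (INR k * INR K <= INR k * INR (a2 - 1))%R by apply: Rmult_le_compat_l.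
    have hy : (INR k * INR m * alpha < INR k * INR (a2 - 1) + 1)%R by lra.
    have hq0 : (0 < INR (a1 * a2 + 1))%R by apply: lt_0_INR; apply/ltP; lia.
    have hz : (INR k * INR m * alpha * INR (a1 * a2 + 1) < (INR k * INR (a2 - 1) + 1) * INR (a1 * a2 + 1))%R.
      by apply: Rmult_lt_compat_r.
    have hw : (INR k * INR m * INR a2 < INR k * INR m * (alpha * INR (a1 * a2 + 1)))%R.
      by apply: Rmult_lt_compat_l.
    have := @ar_real _ _ _ _ _ hw hz.
    by rewrite !INR_muln !INR_addn !INR_muln.
  have hm3 : ((a2 - 1) * a1 + 3 <= m)%N by lia.
  have hk2 : (k * (2 * a2 + 1) < a1 * a2 + 1)%N.
    have hx : (k * (((a2 - 1) * a1 + 3) * a2) <= k * (m * a2))%N.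
      apply: leq_mul => //. apply: leq_mul => //.
    exact: ar_low1 hkm hx ltac:(lia).
  have hk3 : (k + 3 <= a1)%N by exact: ar_low2 hk2 ha1.
  have hsk := sp0 (k + 2)%N ltac:(lia).
  have hsk' := (S_nth (k + 2)%N ltac:(lia)).2.
  have hx : ((k + 2) * (m + 1) <= (k + 2) * (a1 * a2))%N by apply: leq_mul => //; lia.
  lia.
Qed.

End Core.


Lemma cnt_fb (u : word) : (count_mem false u + count_mem true u)%N = size u.
Proof. elim: u => [//|[] u IH] /=; rewrite -IH ?add0n ?add1n ?addnS ?addSn //. Qed.

Lemma blocks_take (us : seq word) (un : word) m :
  (forall u, u \in us -> size u = m) -> forall j, (j < size us)%N ->
  take m (drop (j * m) (flatten us ++ un)) = nth [::] us j.
Proof.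
elim: us => [//|u us IH] hs [|j] hj /=.
- rewrite drop0 -catA take_size_cat //. apply: hs. by rewrite inE eqxx.
- rewrite mulSn addnC -drop_drop -catA drop_size_cat; last by apply: hs; rewrite inE eqxx.
  apply: IH => //. move=> v hv. apply: hs. by rewrite inE hv orbT.
Qed.

Lemma size_flat (us : seq word) m : (forall u, u \in us -> size u = m) ->
  size (flatten us) = (size us * m)%N.
Proof.
elim: us => [//|u us IH] hs /=. rewrite size_cat IH.
- rewrite (hs u) ?inE ?eqxx //; by rewrite mulSn.
- move=> v hv. apply: hs. by rewrite inE hv orbT.
Qed.

Lemma flat_chunks (x : word) d k : (k * d <= size x)%N ->
  flatten (mkseq (fun j => take d (drop (j * d) x)) k) ++ drop (k * d) x = x.
Proof.
elim: k x => [|k IH] x hk /=; first by rewrite mul0n drop0.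
rewrite /mkseq /= -/(mkseq _ _) drop0.
have -> : [seq take d (drop (i * d) x) | i <- iota 1 k] =
          mkseq (fun j => take d (drop (j * d) (drop d x))) k.
  rewrite /mkseq -(addn0 1) iotaDl -map_comp. apply: eq_map => i /=.
  by rewrite drop_drop mulnDl mul1n addnC.
have e : drop (k.+1 * d) x = drop (k * d) (drop d x) by rewrite drop_drop mulSn addnC.
rewrite e -catA IH; first by rewrite cat_take_drop.
rewrite size_drop. move: hk. rewrite mulSn. lia.
Qed.

Lemma contained_small (u : word) a1 : (size u < a1)%N -> (count_mem true u <= 1)%N ->
  pv_contained (parikh u) ((a1 - 1)%N, 1%N).
Proof.
move=> hs hc. have e := cnt_fb u. rewrite /pv_contained /parikh /=.
move: e hs hc. move: (count_mem false u) (count_mem true u) (size u) => x y z e hs hc.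
split; first lia. split; first lia.
case=> e1 e2. lia.
Qed.

Section Word.
Variables (F : nat -> Z) (alpha : R) (a1 a2 m : nat) (w : word).
Hypothesis ha : (0 < alpha)%R.
Hypothesis h1 : (INR a1 * alpha < 1)%R.
Hypothesis h2 : (INR a2 < alpha * INR (a1 * a2 + 1))%R.
Hypothesis ha1 : (4 <= a1)%N.
Hypothesis ha2 : (2 <= a2)%N.
Hypothesis hlo : ((a2 - 1) * a1 + 2 < m)%N.
Hypothesis hhi : (m < a2 * a1)%N.
Hypothesis HA1 : forall x y, (x <= y)%N ->
  (INR (y - x) * alpha - 1 < IZR (F y - F x) < INR (y - x) * alpha + 1)%R.
Hypothesis HA2 : forall s s', (s <= s')%N -> F (s + a1) = F s -> F (s' + a1) = F s' ->
  (INR (s' - s) * alpha - (1 - INR a1 * alpha) < IZR (F s' - F s) <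
   INR (s' - s) * alpha + (1 - INR a1 * alpha))%R.
Hypothesis Hlet : forall j, (j < size w)%N -> nth false w j = (F j.+1 - F j =? 1)%Z.

Lemma W1 x y : (x <= y)%N -> (Z.of_nat a1 * (F y - F x) <= Z.of_nat (y - x) + Z.of_nat a1 - 1)%Z.
Proof.
move=> hxy. have [_ hb] := HA1 x y hxy.
have hA : (0 < INR a1)%R by apply: lt_0_INR; apply/ltP; lia.
have hy : (0 <= INR (y - x))%R by apply: pos_INR.
have : (INR a1 * IZR (F y - F x) < INR (y - x) + INR a1)%R.
  have : (INR a1 * IZR (F y - F x) < INR a1 * (INR (y - x) * alpha + 1))%R.
    by apply: Rmult_lt_compat_l.
  have : (INR (y - x) * (INR a1 * alpha) <= INR (y - x))%R.
    rewrite -{2}(Rmult_1_r (INR (y - x))). apply: Rmult_le_compat_l; lra.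
  nra.
rewrite !INR_IZR_INZ -mult_IZR -plus_IZR => /lt_IZR. lia.
Qed.

Lemma W0 x y : (x <= y)%N -> (F x <= F y)%Z.
Proof.
move=> hxy. have [hb _] := HA1 x y hxy.
have : (0 <= INR (y - x) * alpha)%R by apply: Rmult_le_pos; [apply: pos_INR| lra].
move=> h. have : (-1 < IZR (F y - F x))%R by lra.
move=> /lt_IZR. lia.
Qed.

Lemma step01 j : (F j.+1 - F j = 0 \/ F j.+1 - F j = 1)%Z.
Proof.
have h0 := W0 _ _ (leqnSn j). have h := W1 _ _ (leqnSn j).
have e : (j.+1 - j = 1)%N by lia. rewrite e in h. nia.
Qed.

Lemma cnt_slice a len : (a + len <= size w)%N ->
  Z.of_nat (count_mem true (take len (drop a w))) = (F (a + len) - F a)%Z.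
Proof.
elim: len => [|len IH] hl; first by rewrite take0 addn0 /=; lia.
rewrite (take_nth false); last by rewrite size_drop; lia.
rewrite -cats1 count_cat nth_drop /= Hlet; last by lia.
have := IH ltac:(lia). rewrite addnS.
case: (step01 (a + len)) => hd; rewrite hd /=; lia.
Qed.

Lemma cnt_le1 a len : (a + len <= size w)%N -> (len < a1)%N ->
  (count_mem true (take len (drop a w)) <= 1)%N.
Proof.
move=> h hl. have := cnt_slice _ _ h. have := W1 _ _ (leq_addr len a).
have e : (a + len - a = len)%N by lia. rewrite e.
move: (count_mem true _) => c. move=> h3 h4. rewrite -h4 in h3. nia.
Qed.

Lemma main_word : abelian_period w m -> abelian_period w a1.
Proof.
move=> [u0 [un [us [P [Hw [Hne [Hus [Hc0 Hcn]]]]]]]].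
set N := size w.
have hsz : forall u, u \in us -> size u = m by move=> u hu; case: (Hus u hu).
have [u hu] : exists u, u \in us by case: (us) Hne => [//|u ?] _; exists u; rewrite inE eqxx.
have hP : (P.1 + P.2 = m)%N.
  case: (Hus u hu) => pu su. rewrite -su -cnt_fb. by rewrite /parikh in pu; rewrite -pu.
have small : forall v : word, pv_contained (parikh v) P -> (size v < m)%N.
  move=> v [c1 [c2 cne]]. rewrite ltnNge; apply/negP => hge. apply: cne.
  have := cnt_fb v. move: c1 c2 hP hge. rewrite /parikh /=. case: (P) => p1 p2 /=.
  move: (count_mem false v) (count_mem true v) (size v) => x y z c1 c2 hP hge e.
  f_equal; lia.
have ho := small _ Hc0. have he := small _ Hcn.
set o := size u0 in ho. set e := size un in he. set k := size us. set K := P.2.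
have HN : N = (o + k * m + e)%N by rewrite /N Hw !size_cat (size_flat _ _ hsz) addnA.
have hk : (1 <= k)%N by rewrite /k; case: (us) Hne.
have HK : forall j, (j < k)%N -> (F (o + j.+1 * m) - F (o + j * m) = Z.of_nat K)%Z.
  move=> j hj.
  have hsl : (o + j * m + m <= size w)%N.
    rewrite -/N HN. have : (j.+1 * m <= k * m)%N by apply: leq_mul. rewrite mulSn. lia.
  have := cnt_slice _ _ hsl.
  have -> : (o + j * m + m = o + j.+1 * m)%N by rewrite mulSn; lia.
  move=> <-.
  have -> : drop (o + j * m) w = drop (j * m) (flatten us ++ un).
    by rewrite Hw addnC -drop_drop drop_size_cat.
  rewrite blocks_take //. have := Hus _ (mem_nth [::] hj). case=> pe _.
  by rewrite /K -pe.
have HS := @S_small F alpha a1 a2 m N o k e K ha h1 h2 ha1 ha2 hlo hhi HA1 HA2 HN ho he hk HK.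
have sep' := @sep F alpha a1 a2 m N o k e ha h1 h2 ha1 ha2 hlo hhi HA2 HN ho he hk.
have hkm : (m <= k * m)%N by rewrite leq_pmull.
have hNm : (m <= N)%N by rewrite HN; lia.
have ha1a : (a1 <= (a2 - 1) * a1)%N by rewrite leq_pmull; lia.
have ha1m : (a1 + 3 <= m)%N by lia.
set cands := iota 0 (minn a1 (N - a1).+1).
have hlt : (size (S F a1 N) < size cands)%N.
  rewrite /cands size_iota. case: (leqP a1 (N - a1).+1) => hmin.
  - lia.
  - rewrite ltnNge; apply/negP => hc.
    have h01 := @S_lt F a1 a2 m N o k e ha1 ha2 hlo hhi HN ho he hk 0 1 isT ltac:(lia).
    have := sep' _ _ h01 (@S_nth F a1 N 0 ltac:(lia)).1 (@S_nth F a1 N 1 ltac:(lia)).1.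
    have := (@S_nth F a1 N 1 ltac:(lia)).2.
    have : (a1 <= a1 * a2)%N by rewrite leq_pmulr; lia.
    lia.
have : ~~ all (fun c => c \in map (modn^~ a1) (S F a1 N)) cands.
  apply/negP => hall.
  have := uniq_leq_size (iota_uniq 0 (minn a1 (N - a1).+1)) (fun c hc => (allP hall) c hc).
  rewrite size_map. rewrite -/cands. move=> hh. have := leq_trans hlt hh. by rewrite ltnn.
case/allPn => o' ho'c ho'n.
move: ho'c; rewrite mem_iota add0n => /andP [_ ho'm].
have ho'a : (o' < a1)%N by move: ho'm; rewrite leq_min => /andP [].
have ho'N : (o' <= N - a1)%N by move: ho'm; rewrite leq_min ltnS => /andP [].
have nocc : forall s, (s <= N - a1)%N -> (s %% a1 = o')%N -> F (s + a1) <> F s.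
  move=> s hs hm hocc. move/negP: ho'n; apply. rewrite -hm. apply: map_f.
  rewrite mem_filter mem_iota /occ hocc Z.eqb_refl /=. lia.
set x := drop o' w.
have hx : size x = (N - o')%N by rewrite size_drop.
set k' := ((N - o') %/ a1)%N.
have hk'1 : (k' * a1 <= N - o')%N by apply: leq_trunc_div.
have hk'2 : (N - o' < k' * a1 + a1)%N.
  have ha0 : (0 < a1)%N by lia.
  have := ltn_pmod (N - o') ha0.
  have := divn_eq (N - o') a1. rewrite -/k'. lia.
exists (take o' w), (drop (k' * a1) x), (mkseq (fun j => take a1 (drop (j * a1) x)) k'), ((a1 - 1)%N, 1%N).
split; first by rewrite flat_chunks ?cat_take_drop // hx.
split.
  have : (0 < k')%N by rewrite divn_gt0; lia.
  by case: (k').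
split.
  move=> v /mapP [j]; rewrite mem_iota add0n => /andP [_ hj] ->.
  have hjs : (o' + j * a1 + a1 <= size w)%N.
    have : (j.+1 * a1 <= k' * a1)%N by apply: leq_mul.
    rewrite mulSn -/N. lia.
  have hsz' : size (take a1 (drop (j * a1) x)) = a1.
    rewrite size_takel // size_drop hx. have : (j.+1 * a1 <= k' * a1)%N by apply: leq_mul.
    rewrite mulSn. lia.
  have ed : drop (j * a1) x = drop (o' + j * a1) w by rewrite /x drop_drop addnC.
  have hc := cnt_slice _ _ hjs. rewrite -ed in hc.
  have h01 := step01 0.
  have hle := W1 _ _ (leq_addr a1 (o' + j * a1)).
  have e1 : (o' + j * a1 + a1 - (o' + j * a1) = a1)%N by lia. rewrite e1 in hle.
  have hge := W0 _ _ (leq_addr a1 (o' + j * a1)).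
  have hne : F (o' + j * a1 + a1) <> F (o' + j * a1).
    apply: nocc.
    + have : (j.+1 * a1 <= k' * a1)%N by apply: leq_mul.
      rewrite mulSn. lia.
    + by rewrite addnC modnMDl modn_small.
  have hc1 : count_mem true (take a1 (drop (j * a1) x)) = 1%N.
    move: hc hle hge hne. move: (count_mem true _) => c. move=> hc hle hge hne.
    rewrite -hc in hle. nia.
  split=> //. rewrite /parikh hc1. f_equal.
  have := cnt_fb (take a1 (drop (j * a1) x)). rewrite hc1 hsz'. lia.
split.
  apply: contained_small.
  - rewrite size_takel //. lia.
  - have := @cnt_le1 0 o' ltac:(lia) ho'a. by rewrite drop0.
apply: contained_small.
- rewrite size_drop hx. lia.
- have ed : drop (k' * a1) x = drop (o' + k' * a1) w by rewrite /x drop_drop addnC.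
  rewrite ed -(take_oversize (n := (N - (o' + k' * a1))%N) (s := drop (o' + k' * a1) w)); last by rewrite size_drop.
  apply: cnt_le1; lia.
Qed.

End Word.


Lemma Int_part_uniq (x : R) (z : Z) : (IZR z <= x < IZR z + 1)%R -> Int_part x = z.
Proof.
move=> [h1 h2]. rewrite /Int_part.
have : (z + 1)%Z = up x.
  apply: tech_up; rewrite plus_IZR; lra.
lia.
Qed.

Lemma ceil_uniq (x : R) (z : Z) : (IZR z - 1 < x <= IZR z)%R -> (- Int_part (- x))%Z = z.
Proof.
move=> [h1 h2]. have : Int_part (- x) = (- z)%Z.
  apply: Int_part_uniq. rewrite opp_IZR. lra.
lia.
Qed.

Lemma INR_sub_add (i a b : nat) : (a <= b)%N -> (INR (i + b) - INR (i + a) = INR (b - a))%R.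
Proof.
move=> h. have -> : (i + b = (i + a) + (b - a))%N by lia.
rewrite INR_addn. ring.
Qed.

Section Lower.
Variables (alpha rho : R) (i a1 : nat) (w : word).
Hypothesis ha : (0 < alpha < 1)%R.
Hypothesis h1 : (INR a1 * alpha < 1)%R.
Definition XX n := (rho + INR (i + n) * alpha)%R.
Definition FL n := Int_part (XX n).
Definition phiL n := (XX n - IZR (FL n))%R.

Lemma phiL_bd n : (0 <= phiL n < 1)%R.
Proof. rewrite /phiL /FL. have [h h'] := base_Int_part (XX n). lra. Qed.

Lemma XX_diff a b : (a <= b)%N -> (XX b - XX a = INR (b - a) * alpha)%R.
Proof. move=> h. rewrite /XX -(INR_sub_add i _ _ h). ring. Qed.

Lemma XX_S n : XX n.+1 = (XX n + alpha)%R.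
Proof. rewrite /XX addnS S_INR. ring. Qed.

Lemma FL_diff a b : (a <= b)%N -> IZR (FL b - FL a) = (INR (b - a) * alpha + phiL a - phiL b)%R.
Proof. move=> h. rewrite minus_IZR -(XX_diff _ _ h) /phiL. ring. Qed.

Lemma L_HA1 x y : (x <= y)%N ->
  (INR (y - x) * alpha - 1 < IZR (FL y - FL x) < INR (y - x) * alpha + 1)%R.
Proof. move=> h. rewrite (FL_diff _ _ h). have := phiL_bd x. have := phiL_bd y. lra. Qed.

Lemma L_occ s : FL (s + a1) = FL s -> (phiL s < 1 - INR a1 * alpha)%R.
Proof.
move=> e. have := FL_diff _ _ (leq_addr a1 s). rewrite e Z.sub_diag.
have -> : (s + a1 - s = a1)%N by lia.
have := phiL_bd (s + a1). move=> h h'. lra.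
Qed.

Lemma L_HA2 s s' : (s <= s')%N -> FL (s + a1) = FL s -> FL (s' + a1) = FL s' ->
  (INR (s' - s) * alpha - (1 - INR a1 * alpha) < IZR (FL s' - FL s) <
   INR (s' - s) * alpha + (1 - INR a1 * alpha))%R.
Proof.
move=> h o1 o2. rewrite (FL_diff _ _ h). have := L_occ _ o1. have := L_occ _ o2.
have := phiL_bd s. have := phiL_bd s'. lra.
Qed.

Hypothesis Hw : w = mkseq (fun j => sturm_letter_lo alpha rho (i + j)) (size w).

Lemma L_let j : (j < size w)%N -> nth false w j = (FL j.+1 - FL j =? 1)%Z.
Proof.
move=> hj. rewrite Hw nth_mkseq // /sturm_letter_lo.
have hb := phiL_bd j.
have e : frac (rho + INR (i + j) * alpha) = phiL j by [].
rewrite e.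
case: (Rlt_dec (phiL j) (1 - alpha)) => hc.
- have -> : FL j.+1 = FL j.
    apply: Int_part_uniq. rewrite XX_S. move: hb hc; rewrite /phiL. lra.
  by rewrite Z.sub_diag.
- have -> : FL j.+1 = (FL j + 1)%Z.
    apply: Int_part_uniq. rewrite XX_S plus_IZR. move: hb hc; rewrite /phiL. lra.
  have -> : (FL j + 1 - FL j = 1)%Z by ring. done.
Qed.
End Lower.

Section Upper.
Variables (alpha rho : R) (i a1 : nat) (w : word).
Hypothesis ha : (0 < alpha < 1)%R.
Hypothesis h1 : (INR a1 * alpha < 1)%R.
Definition FU n := (- Int_part (- XX alpha rho i n))%Z.
Definition psiU n := (IZR (FU n) - XX alpha rho i n)%R.

Lemma psiU_bd n : (0 <= psiU n < 1)%R.
Proof.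
rewrite /psiU /FU opp_IZR. have [h h'] := base_Int_part (- XX alpha rho i n). lra.
Qed.

Lemma FU_diff a b : (a <= b)%N -> IZR (FU b - FU a) = (INR (b - a) * alpha + psiU b - psiU a)%R.
Proof. move=> h. rewrite minus_IZR -(XX_diff alpha rho i _ _ h) /psiU. ring. Qed.

Lemma U_HA1 x y : (x <= y)%N ->
  (INR (y - x) * alpha - 1 < IZR (FU y - FU x) < INR (y - x) * alpha + 1)%R.
Proof. move=> h. rewrite (FU_diff _ _ h). have := psiU_bd x. have := psiU_bd y. lra. Qed.

Lemma U_occ s : FU (s + a1) = FU s -> (INR a1 * alpha <= psiU s)%R.
Proof.
move=> e. have := FU_diff _ _ (leq_addr a1 s). rewrite e Z.sub_diag.
have -> : (s + a1 - s = a1)%N by lia.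
have := psiU_bd (s + a1). move=> h h'. lra.
Qed.

Lemma U_HA2 s s' : (s <= s')%N -> FU (s + a1) = FU s -> FU (s' + a1) = FU s' ->
  (INR (s' - s) * alpha - (1 - INR a1 * alpha) < IZR (FU s' - FU s) <
   INR (s' - s) * alpha + (1 - INR a1 * alpha))%R.
Proof.
move=> h o1 o2. rewrite (FU_diff _ _ h). have := U_occ _ o1. have := U_occ _ o2.
have := psiU_bd s. have := psiU_bd s'. lra.
Qed.

Hypothesis Hw : w = mkseq (fun j => sturm_letter_up alpha rho (i + j)) (size w).

Lemma U_let j : (j < size w)%N -> nth false w j = (FU j.+1 - FU j =? 1)%Z.
Proof.
move=> hj. rewrite Hw nth_mkseq // /sturm_letter_up.
have e : (rho + INR (i + j) * alpha)%R = XX alpha rho i j by [].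
rewrite e /frac.
set x := XX alpha rho i j.
have [hb1 hb2] := base_Int_part x.
set I := Int_part x in hb1 hb2 *.
have hS : XX alpha rho i j.+1 = (x + alpha)%R by rewrite XX_S.
case: (Rlt_dec 0 (x - IZR I)) => hc.
- have hG : FU j = (I + 1)%Z.
    apply: ceil_uniq. rewrite plus_IZR. rewrite /x in hb1 hb2 hc *. lra.
  case: (Rle_dec (x - IZR I) (1 - alpha)) => hd.
  + have -> : FU j.+1 = (I + 1)%Z.
      apply: ceil_uniq. rewrite hS plus_IZR. lra.
    by rewrite hG Z.sub_diag.
  + have -> : FU j.+1 = (I + 2)%Z.
      apply: ceil_uniq. rewrite hS plus_IZR. lra.
    rewrite hG. have -> : (I + 2 - (I + 1) = 1)%Z by ring. done.
- have hx : x = IZR I by lra.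
  have hG : FU j = I.
    apply: ceil_uniq. rewrite /x in hx *. lra.
  have -> : FU j.+1 = (I + 1)%Z.
    apply: ceil_uniq. rewrite hS plus_IZR. lra.
  rewrite hG. have -> : (I + 1 - I = 1)%Z by ring. done.
Qed.
End Upper.


Theorem lemma5p4 (a : nat -> nat) (alpha : R)
  (Halpha : (0 < alpha < 1)%R) (Hirr : irrational alpha)
  (Hcf : cf_expansion a alpha) (Ha1 : (2 <= a 1)%N)
  (w : word) (m : nat)
  (Hw : factor_of_slope alpha w) (Hm : abelian_period w m)
  (HQ : ~ in_Q a m) (HM : ~ in_M a m)
  (Ha1' : (4 <= a 1)%N)
  (Hlo : ((a 2 - 1) * cf_q a 1 + 2 < m)%N) (Hhi : (m < a 2 * cf_q a 1)%N) :
  ~ min_abelian_period w m.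
Proof.
move=> [_ Hmin].
have Ha := Hcf.1.
have [hc2 hc1] := @alpha_between a alpha Hcf Hirr.
rewrite /cv cf_p_rec cf_q_rec cf_p1 cf_q1 cf_p0 cf_q0 in hc2.
rewrite /cv cf_p1 cf_q1 in hc1.
rewrite cf_q1 in Hlo Hhi.
have Ha2pos := Ha 2%N isT.
set a1 := a 1%N in Ha1 Ha1' Hlo Hhi hc1 hc2 *. set a2 := a 2%N in Hlo Hhi hc2 Ha2pos *.
have hA1 : (1 <= INR (a1))%R by apply: (le_INR 1); apply/leP; lia.
have h1 : (INR (a1) * alpha < 1)%R.
  have := Rmult_lt_compat_l (INR (a1)) _ _ ltac:(lra) hc1.
  have -> : (INR (a1) * (INR 1 / INR (a1)) = 1)%R by rewrite /=; field; lra.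
  done.
have h2 : (INR (a2) < alpha * INR (a1 * a2 + 1))%R.
  have hq : (0 < INR (a2 * a1 + 1))%R by apply: lt_0_INR; apply/ltP; lia.
  have := Rmult_lt_compat_r (INR (a2 * a1 + 1)) _ _ hq hc2.
  have -> : (INR (a2 * 1 + 0) / INR (a2 * a1 + 1) * INR (a2 * a1 + 1) = INR (a2 * 1 + 0))%R.
    by field; lra.
  by rewrite muln1 addn0 (mulnC (a1)).
have ha : (0 < alpha)%R by lra.
have ha2 : (2 <= a2)%N.
  case: (leqP 2 (a2)) => // hlt. exfalso. apply: HM.
  have e2 : a2 = 1%N by lia.
  exists 0%N, m. rewrite cf_q0 muln1. split; first lia. split=> //.
  rewrite e2 mul1n in Hhi. lia.
have hlt : (a1 < m)%N.
  have : (a1 <= (a2 - 1) * a1)%N by rewrite leq_pmull; lia.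
  lia.
have Hper : abelian_period w (a1).
  case: Hw => rho [i [hrho [Hl|Hu]]].
  - apply: (@main_word (FL alpha rho i) alpha (a1) (a2) m w ha h1 h2 Ha1' ha2 Hlo Hhi _ _ _ Hm).
    + by move=> x y h; apply: L_HA1.
    + move=> s s' h o1 o2. exact: (L_HA2 alpha rho i a1 s s' h o1 o2).
    + move=> j hj. exact: (L_let alpha rho i w Halpha Hl j hj).
  - apply: (@main_word (FU alpha rho i) alpha (a1) (a2) m w ha h1 h2 Ha1' ha2 Hlo Hhi _ _ _ Hm).
    + by move=> x y h; apply: U_HA1.
    + move=> s s' h o1 o2. exact: (U_HA2 alpha rho i a1 s s' h o1 o2).
    + move=> j hj. exact: (U_let alpha rho i w Halpha Hu j hj).
have := Hmin _ Hper. lia.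
Qed.
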